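(* Let $G$ be a $B_2$-EPG graph given with a representation, let $a,b$ be two rows, and let $Y$ be a set of vertices all with index exactly $\{a,b\}$. Suppose the projection graph of $Y$ on $a$ is not a clique. Then there is a proper typed interval $t$ on row $a$ such that: (1) every vertex of $Y$ intersects $t$; (2) for every vertex $u$ whose index is $\{a\}$ or $\{a,c\}$ with $c\neq a,b$, $u$ is adjacent to every vertex of $Y$ if and only if $u$ contains $t$.
   Context: A graph $G$ is a $B_k$-EPG graph if each vertex $u$ can be assigned a path $P_u$ in the planar orthogonal grid with at most $k$ bends such that $uv\in E(G)$ iff $P_u$ and $P_v$ share at least one grid edge (a representation); for $B_2$-EPG graphs one assumes w.l.o.g. every path has exactly two bends. A vertex $u$ intersects a row if $P_u$ contains a grid edge of that row; the index of $u$ is the set of rows it intersects. If $a$ is in the index of $u$, $P_u^a$ is the segment of row $a$ between the two points of row $a$ where $P_u$ stops or bends. Types: $\emptyset$, $\mathsf d$, $\mathsf u$. A typed interval on row $a$ is $[x\alpha, y\beta]$ with $\alpha\le\beta$ points of row $a$ and $x,y$ types; it is proper if $\alpha\neq\beta$, or $\alpha=\beta$, $x=y$ and $x\in\{\mathsf u,\mathsf d\}$. For typed intervals $t=[x\alpha,y\beta]$, $t'=[x'\alpha',y'\beta']$ on row $a$ and an endpoint $z\gamma\in\{x'\alpha',y'\beta'\}$ of $t'$, $t$ is coherent with $z\gamma$ if (i) $\gamma\in(\alpha,\beta)$ (open interval), or (ii) $z=\emptyset$ and $[\alpha,\beta]$ contains the grid edge of $[\alpha',\beta']$ incident to $\gamma$,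 or (iii) $z\neq\emptyset$ and $z\gamma\in\{x\alpha,y\beta\}$. $t$ contains $t'$ if $[\alpha',\beta']\subseteq[\alpha,\beta]$ and $t$ is coherent with both endpoints of $t'$. $t$ intersects $t'$ if $[\alpha,\beta]\cap[\alpha',\beta']$ contains a grid edge, or $t$ is coherent with an endpoint of $t'$, or $t'$ is coherent with an endpoint of $t$. The t-projection of $u$ on $a$ is $[x\alpha,y\beta]$ where $\alpha,\beta$ are the endpoints of $P_u^a$ and the type of an endpoint $\gamma$ is $\emptyset$ if $P_u$ ends at $\gamma$, $\mathsf d$ if $P_u$ bends downwards at $\gamma$, $\mathsf u$ if upwards. A vertex contains (intersects) a typed interval $t$ on $a$ if its t-projection on $a$ contains (intersects) $t$. The projection graph of a set $Y$ of vertices whose indices contain $a$ is the graph on $Y$ in which $u,v$ are adjacent iff their t-projections on $a$ intersect. *)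

(* Defs.v *)
From Stdlib Require Import ZArith List.
Open Scope Z_scope.

(* Grid points are (x, y) : Z * Z; row a is the horizontal line y = a.
   Grid edges: EH x y = {(x,y),(x+1,y)} (horizontal, in row y),
               EV x y = {(x,y),(x,y+1)} (vertical). *)
Inductive gedge := EH (x y : Z) | EV (x y : Z).

(* A path with exactly two bends (B_2-EPG convention), given by its
   start point q0, its two bend points q1, q2 and its end point q3. *)
Record path2 := Path2 { q0 : Z * Z; q1 : Z * Z; q2 : Z * Z; q3 : Z * Z }.

Definition horiz (p q : Z * Z) : Prop := snd p = snd q /\ fst p <> fst q.
Definition vert (p q : Z * Z) : Prop := fst p = fst q /\ snd p <> snd q.

Definition valid2 (P : path2) : Prop :=
  (horiz (q0 P) (q1 P) /\ vert (q1 P) (q2 P) /\ horiz (q2 P) (q3 P)) \/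
  (vert (q0 P) (q1 P) /\ horiz (q1 P) (q2 P) /\ vert (q2 P) (q3 P)).

Definition seg_edge (p q : Z * Z) (e : gedge) : Prop :=
  match e with
  | EH x y => y = snd p /\ y = snd q /\ Z.min (fst p) (fst q) <= x < Z.max (fst p) (fst q)
  | EV x y => x = fst p /\ x = fst q /\ Z.min (snd p) (snd q) <= y < Z.max (snd p) (snd q)
  end.

Definition path_edge (P : path2) (e : gedge) : Prop :=
  seg_edge (q0 P) (q1 P) e \/ seg_edge (q1 P) (q2 P) e \/ seg_edge (q2 P) (q3 P) e.

Definition share_edge (P Q : path2) : Prop :=
  exists e, path_edge P e /\ path_edge Q e.

(* P intersects row a: contains a grid edge of row a *)
Definition in_index (P : path2) (a : Z) : Prop := exists x, path_edge P (EH x a).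

(* types: empty (path ends), d (bends downwards), u (bends upwards) *)
Inductive typ := Tnone | Td | Tu.

Record tint := TInt { tx : typ; ta : Z; ty : typ; tb : Z }.

Definition mk_tint (x1 : typ) (g1 : Z) (x2 : typ) (g2 : Z) : tint :=
  if g1 <=? g2 then TInt x1 g1 x2 g2 else TInt x2 g2 x1 g1.

(* type of a bend on row a whose vertical part goes towards row r *)
Definition vtype (a r : Z) : typ := if r <? a then Td else Tu.

Definition tproj (P : path2) (a : Z) : tint :=
  if snd (q0 P) =? snd (q1 P) then
    (* horizontal - vertical - horizontal *)
    if a =? snd (q0 P)
    then mk_tint Tnone (fst (q0 P)) (vtype a (snd (q2 P))) (fst (q1 P))
    else mk_tint (vtype a (snd (q1 P))) (fst (q2 P)) Tnone (fst (q3 P))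
  else
    (* vertical - horizontal - vertical *)
    mk_tint (vtype a (snd (q0 P))) (fst (q1 P)) (vtype a (snd (q3 P))) (fst (q2 P)).

Definition proper (t : tint) : Prop :=
  ta t < tb t \/ (ta t = tb t /\ tx t = ty t /\ tx t <> Tnone).

(* t coherent with endpoint z gamma; [edge_in] expresses that [alpha,beta]
   contains the grid edge of the other interval incident to gamma *)
Definition coh (t : tint) (z : typ) (g : Z) (edge_in : Prop) : Prop :=
  (ta t < g < tb t) \/
  (z = Tnone /\ edge_in) \/
  (z <> Tnone /\ ((z = tx t /\ g = ta t) \/ (z = ty t /\ g = tb t))).

Definition coh_left (t t' : tint) : Prop :=
  coh t (tx t') (ta t') (ta t' < tb t' /\ ta t <= ta t' /\ ta t' + 1 <= tb t).
Definition coh_right (t t' : tint) : Prop :=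
  coh t (ty t') (tb t') (ta t' < tb t' /\ ta t <= tb t' - 1 /\ tb t' <= tb t).

Definition tcontains (t t' : tint) : Prop :=
  ta t <= ta t' /\ tb t' <= tb t /\ coh_left t t' /\ coh_right t t'.

Definition tintersects (t t' : tint) : Prop :=
  Z.max (ta t) (ta t') + 1 <= Z.min (tb t) (tb t') \/
  coh_left t t' \/ coh_right t t' \/ coh_left t' t \/ coh_right t' t.

(* Main.v *)
Require Import Defs.
From Stdlib Require Import ZArith List Lia Setoid Classical.
Open Scope Z_scope.

Lemma typ_nd : (Tnone = Td <-> False) /\ (Tnone = Tu <-> False) /\ (Td = Tnone <-> False)
  /\ (Td = Tu <-> False) /\ (Tu = Tnone <-> False) /\ (Tu = Td <-> False).
Proof. repeat split; intro H; (discriminate H || destruct H). Qed.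
Lemma typ_rf (x : typ) : (x = x) <-> True.
Proof. split; auto. Qed.

Ltac typs := let H := fresh in pose proof typ_nd as H;
  destruct H as (?&?&?&?&?&?);
  repeat match goal with
  | H : (_ = _ <-> False) |- _ => (rewrite H in * ); clear H
  end; rewrite ?typ_rf in *.

Ltac dest_ifs := repeat match goal with
 | |- context [if ?x <=? ?y then _ else _] => destruct (Z.leb_spec x y)
 | |- context [if ?x <? ?y then _ else _] => destruct (Z.ltb_spec x y)
 | |- context [if ?x =? ?y then _ else _] => destruct (Z.eqb_spec x y)
 | H : context [if _ then _ else _] |- _ => revert H
 end.

Ltac dor := repeat match goal with H : _ \/ _ |- _ => destruct H end.
Ltac dand := repeat match goal with H : _ /\ _ |- _ => destruct H end.

Lemma shape P a : valid2 P -> in_index P a ->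
 (exists x0 x1 x3 c, c <> a /\ x0 <> x1 /\ x1 <> x3 /\ P = Path2 (x0,a) (x1,a) (x1,c) (x3,c)) \/
 (exists x0 x1 x3 c, c <> a /\ x0 <> x1 /\ x1 <> x3 /\ P = Path2 (x0,c) (x1,c) (x1,a) (x3,a)) \/
 (exists x1 x2 c d, c <> a /\ d <> a /\ x1 <> x2 /\ P = Path2 (x1,c) (x1,a) (x2,a) (x2,d)).
Proof.
  destruct P as [[x0 y0] [x1 y1] [x2 y2] [x3 y3]].
  unfold valid2, horiz, vert, in_index, path_edge, seg_edge; cbn [fst snd q0 q1 q2 q3].
  intros [[[? ?] [[? ?] [? ?]]] | [[? ?] [[? ?] [? ?]]]] [x [Hx|[Hx|Hx]]]; dand; subst.
  all: first [ exfalso; lia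
   | left; do 4 eexists; refine (conj _ (conj _ (conj _ eq_refl))); lia
   | right; left; do 4 eexists; refine (conj _ (conj _ (conj _ eq_refl))); lia
   | right; right; do 4 eexists; refine (conj _ (conj _ (conj _ eq_refl))); lia ].
Qed.

Ltac shp P a Hv Hi := destruct (shape P a Hv Hi) as
  [(x0&x1&x3&c&Hc&H01&H13&->)|[(x0&x1&x3&c&Hc&H01&H13&->)|(x1&x2&c&d&Hc&Hd&H12&->)]];
  unfold tproj, path_edge, seg_edge, mk_tint, vtype in *; cbn [fst snd q0 q1 q2 q3] in *;
  rewrite ?Z.eqb_refl in *;
  repeat match goal with
   | H : ?u <> ?v |- context [?u =? ?v] => rewrite (proj2 (Z.eqb_neq u v) H)
   | H : ?u <> ?v |- context [?v =? ?u] => rewrite (proj2 (Z.eqb_neq v u) (not_eq_sym H))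
   end.

Lemma G1 P a x : valid2 P -> in_index P a ->
  (path_edge P (EH x a) <-> ta (tproj P a) <= x < tb (tproj P a)).
Proof.
  intros Hv Hi. shp P a Hv Hi; dest_ifs; intros; cbn [tx ty ta tb]; split; intros; dor; lia.
Qed.

Lemma G2 P a : valid2 P -> in_index P a -> ta (tproj P a) < tb (tproj P a).
Proof.
  intros Hv Hi. shp P a Hv Hi; dest_ifs; intros; cbn [tx ty ta tb]; lia.
Qed.

Lemma G3a P a b c0 r : valid2 P -> in_index P a -> b <> a -> Z.min a b <= r < Z.max a b ->
  path_edge P (EV c0 r) ->
  (tx (tproj P a) = vtype a b /\ ta (tproj P a) = c0) \/ (ty (tproj P a) = vtype a b /\ tb (tproj P a) = c0).
Proof.
  intros Hv Hi Hb Hr He. shp P a Hv Hi; unfold vtype; dest_ifs; intros; cbn [tx ty ta tb] in *; typs; dor; lia.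
Qed.

Lemma G3b P a b c0 : valid2 P -> in_index P a -> b <> a ->
  (tx (tproj P a) = vtype a b /\ ta (tproj P a) = c0) \/ (ty (tproj P a) = vtype a b /\ tb (tproj P a) = c0) ->
  path_edge P (EV c0 (if b <? a then a - 1 else a)).
Proof.
  intros Hv Hi Hb He. shp P a Hv Hi; unfold vtype in *; dest_ifs; intros; cbn [tx ty ta tb] in *; typs; dor; lia.
Qed.

Definition isR (s : tint) : bool := match tx s with Tnone => true | _ => false end.
Definition yform (z0:typ) (s:tint) := ta s < tb s /\ ((tx s = Tnone /\ ty s = z0) \/ (tx s = z0 /\ ty s = Tnone)).
Definition Lpart z0 u s := if isR s then (ta u < tb s \/ (ta u = tb s /\ tx u = z0)) else ta u < tb s.
Definition Rpart z0 u s := if isR s then ta s < tb u else (ta s < tb u \/ (ta s = tb u /\ ty u = z0)).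
Definition kL s := 2*tb s + (if isR s then 1 else 0).
Definition kR s := 2*ta s + (if isR s then 1 else 0).
Definition mkT z0 sl sr := TInt (if isR sl then z0 else Tnone) (if isR sl then tb sl else tb sl - 1)
  (if isR sr then Tnone else z0) (if isR sr then ta sr + 1 else ta sr).

Lemma char z0 u s : z0 <> Tnone -> yform z0 s -> ta u < tb u ->
  (tintersects u s <-> Lpart z0 u s /\ Rpart z0 u s).
Proof.
  destruct u as [xu au yu bu], s as [xs as_ ys bs]; unfold yform; cbn [tx ty ta tb].
  intros Hz [Hs [[-> ->]|[-> ->]]] Hu; destruct z0; try congruence; destruct xu, yu;
  unfold tintersects, coh_left, coh_right, coh, Lpart, Rpart, isR; cbn [tx ty ta tb]; typs; lia.
Qed.

Lemma tint_sym t t' : tintersects t t' <-> tintersects t' t.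
Proof. unfold tintersects. rewrite Z.max_comm, Z.min_comm. tauto. Qed.

Lemma Lmono z0 u s1 s2 : z0 <> Tnone -> yform z0 s1 -> yform z0 s2 -> kL s1 <= kL s2 -> Lpart z0 u s1 -> Lpart z0 u s2.
Proof.
  destruct s1 as [x1 p1 y1 q1], s2 as [x2 p2 y2 q2]; unfold yform, kL, Lpart, isR; cbn [tx ty ta tb].
  destruct u as [xu au yu bu]; intros Hz [_ [[-> ->]|[-> ->]]] [_ [[-> ->]|[-> ->]]]; destruct z0; try congruence; destruct xu; cbn [tx ty ta tb]; typs; lia.
Qed.

Lemma Rmono z0 u s1 s2 : z0 <> Tnone -> yform z0 s1 -> yform z0 s2 -> kR s2 <= kR s1 -> Rpart z0 u s1 -> Rpart z0 u s2.
Proof.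
  destruct s1 as [x1 p1 y1 q1], s2 as [x2 p2 y2 q2]; unfold yform, kR, Rpart, isR; cbn [tx ty ta tb].
  destruct u as [xu au yu bu]; intros Hz [_ [[-> ->]|[-> ->]]] [_ [[-> ->]|[-> ->]]]; destruct z0; try congruence; destruct yu; cbn [tx ty ta tb]; typs; lia.
Qed.

Lemma contains_char z0 u sl sr : z0 <> Tnone -> yform z0 sl -> yform z0 sr ->
  ta (mkT z0 sl sr) < tb (mkT z0 sl sr) -> ta u < tb u ->
  (tcontains u (mkT z0 sl sr) <-> Lpart z0 u sl /\ Rpart z0 u sr).
Proof.
  destruct u as [xu au yu bu], sl as [x1 p1 y1 q1], sr as [x2 p2 y2 q2]; unfold yform; cbn [tx ty ta tb].
  intros Hz [_ [[-> ->]|[-> ->]]] [_ [[-> ->]|[-> ->]]];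
  destruct z0; try congruence; destruct xu, yu;
  unfold mkT, tcontains, coh_left, coh_right, coh, Lpart, Rpart, isR; cbn [tx ty ta tb]; typs; lia.
Qed.

Definition bend (s : tint) := if isR s then tb s else ta s.

Lemma pure1 z0 u s : z0 <> Tnone -> yform z0 s -> ta u < tb u ->
  (Lpart z0 u s /\ Rpart z0 u s <-> (ta u < tb s /\ ta s < tb u) \/
     ((tx u = z0 /\ ta u = bend s) \/ (ty u = z0 /\ tb u = bend s))).
Proof.
  destruct u as [xu au yu bu], s as [xs as_ ys bs]; unfold yform; cbn [tx ty ta tb].
  intros Hz [Hs [[-> ->]|[-> ->]]] Hu; destruct z0; try congruence; destruct xu, yu;
  unfold Lpart, Rpart, bend, isR; cbn [tx ty ta tb]; typs; lia.
Qed.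

Lemma pure2 z0 s c0 : z0 <> Tnone -> yform z0 s ->
  ((tx s = z0 /\ ta s = c0) \/ (ty s = z0 /\ tb s = c0) <-> c0 = bend s).
Proof.
  destruct s as [xs as_ ys bs]; unfold yform; cbn [tx ty ta tb].
  intros Hz [Hs [[-> ->]|[-> ->]]]; destruct z0; try congruence;
  unfold bend, isR; cbn [tx ty ta tb]; typs; lia.
Qed.

Lemma Yshape P a b : valid2 P -> (forall r, in_index P r <-> r = a \/ r = b) -> a <> b ->
 (exists x0 x1 x3, x0 <> x1 /\ x1 <> x3 /\ P = Path2 (x0,a) (x1,a) (x1,b) (x3,b)) \/
 (exists x0 x1 x3, x0 <> x1 /\ x1 <> x3 /\ P = Path2 (x0,b) (x1,b) (x1,a) (x3,a)).
Proof.
  intros Hv HY Hab.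
  assert (Ha : in_index P a) by (apply HY; auto).
  assert (Hb : in_index P b) by (apply HY; auto).
  destruct (shape P a Hv Ha) as
  [(x0&x1&x3&c&Hc&H01&H13&->)|[(x0&x1&x3&c&Hc&H01&H13&->)|(x1&x2&c&d&Hc&Hd&H12&->)]].
  - assert (Hcc : in_index (Path2 (x0,a) (x1,a) (x1,c) (x3,c)) c).
    { exists (Z.min x1 x3). unfold path_edge, seg_edge; cbn. right; right. lia. }
    apply HY in Hcc. assert (c = b) by tauto. subst. left. exists x0, x1, x3; auto.
  - assert (Hcc : in_index (Path2 (x0,c) (x1,c) (x1,a) (x3,a)) c).
    { exists (Z.min x0 x1). unfold path_edge, seg_edge; cbn. left. lia. }
    apply HY in Hcc. assert (c = b) by tauto. subst. right. exists x0, x1, x3; auto.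
  - exfalso. destruct Hb as [x Hx]. unfold path_edge, seg_edge in Hx; cbn in Hx. lia.
Qed.

Lemma Yform P a b : valid2 P -> (forall r, in_index P r <-> r = a \/ r = b) -> a <> b ->
  yform (vtype a b) (tproj P a).
Proof.
  intros Hv HY Hab. destruct (Yshape P a b Hv HY Hab) as [(x0&x1&x3&H01&H13&->)|(x0&x1&x3&H01&H13&->)];
  unfold yform, tproj, mk_tint; cbn [fst snd q0 q1 q2 q3]; rewrite ?Z.eqb_refl;
  [| rewrite (proj2 (Z.eqb_neq a b) Hab)]; dest_ifs; cbn [tx ty ta tb]; intros; typs; lia.
Qed.

Lemma Yvert P a b c0 r : valid2 P -> (forall r, in_index P r <-> r = a \/ r = b) -> a <> b ->
  path_edge P (EV c0 r) -> Z.min a b <= r < Z.max a b.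
Proof.
  intros Hv HY Hab. destruct (Yshape P a b Hv HY Hab) as [(x0&x1&x3&H01&H13&->)|(x0&x1&x3&H01&H13&->)];
  unfold path_edge, seg_edge; cbn [fst snd q0 q1 q2 q3]; intros; dor; lia.
Qed.

Lemma vtype_nn a b : vtype a b <> Tnone.
Proof. unfold vtype; destruct (b <? a); discriminate. Qed.

Lemma geo Pu Py a b : valid2 Pu -> valid2 Py -> in_index Pu a -> ~ in_index Pu b ->
  (forall r, in_index Py r <-> r = a \/ r = b) -> a <> b ->
  (share_edge Pu Py <-> Lpart (vtype a b) (tproj Pu a) (tproj Py a) /\ Rpart (vtype a b) (tproj Pu a) (tproj Py a)).
Proof.
  intros Hvu Hvy Hua Hub HY Hab.
  pose proof (vtype_nn a b) as Hz.
  pose proof (Yform Py a b Hvy HY Hab) as Hf.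
  pose proof (G2 Pu a Hvu Hua) as Hu2.
  assert (Hya : in_index Py a) by (apply HY; auto).
  rewrite (pure1 _ _ _ Hz Hf Hu2).
  split.
  - intros [[x r|c0 r] [He1 He2]].
    + assert (Hr : in_index Py r) by (exists x; auto).
      apply HY in Hr. destruct Hr as [->| ->].
      * apply (G1 Pu a x Hvu Hua) in He1. apply (G1 Py a x Hvy Hya) in He2. left; lia.
      * exfalso; apply Hub; exists x; auto.
    + pose proof (Yvert Py a b c0 r Hvy HY Hab He2) as Hr.
      pose proof (G3a Pu a b c0 r Hvu Hua (not_eq_sym Hab) Hr He1) as Mu.
      pose proof (G3a Py a b c0 r Hvy Hya (not_eq_sym Hab) Hr He2) as My.
      apply (pure2 _ _ _ Hz Hf) in My. subst c0. right; exact Mu.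
  - intros [Hov | Hm].
    + exists (EH (Z.max (ta (tproj Pu a)) (ta (tproj Py a))) a). split.
      * apply (G1 Pu a _ Hvu Hua). lia.
      * apply (G1 Py a _ Hvy Hya). pose proof (G2 Py a Hvy Hya). lia.
    + exists (EV (bend (tproj Py a)) (if b <? a then a - 1 else a)). split.
      * apply (G3b Pu a b _ Hvu Hua (not_eq_sym Hab) Hm).
      * apply (G3b Py a b _ Hvy Hya (not_eq_sym Hab)). apply (pure2 _ _ _ Hz Hf). reflexivity.
Qed.

Lemma exmin (V : Type) (l : list V) : forall (Q : V -> Prop) (f : V -> Z),
  (forall v, Q v -> In v l) -> (exists v, Q v) -> exists v, Q v /\ forall w, Q w -> f v <= f w.
Proof.
  induction l as [|x l IH]; intros Q f Hl [v Hv].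
  - destruct (Hl v Hv).
  - destruct (classic (exists v, Q v /\ v <> x)) as [Hex|Hno].
    + destruct (IH (fun v => Q v /\ v <> x) f) as (m & [Hm1 Hm2] & Hmin).
      { intros w [Hw1 Hw2]. destruct (Hl w Hw1); [congruence | auto]. }
      { exact Hex. }
      destruct (classic (Q x)) as [Hqx|Hqx].
      * destruct (Z.le_gt_cases (f m) (f x)).
        -- exists m; split; auto. intros w Hw. destruct (classic (w = x)) as [->|Hne]; auto.
        -- exists x; split; auto. intros w Hw. destruct (classic (w = x)) as [->|Hne]; [lia|].
           specialize (Hmin w (conj Hw Hne)); lia.
      * exists m; split; auto. intros w Hw. destruct (classic (w = x)) as [->|Hne]; [contradiction|auto].
    + exists x. assert (Hvx : v = x).
      { apply NNPP; intro Hne; apply Hno; exists v; auto. }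
      subst v. split; auto. intros w Hw.
      assert (w = x) by (apply NNPP; intro Hne; apply Hno; exists w; auto). subst; lia.
Qed.

Lemma key z0 sl sr s1 s2 : z0 <> Tnone -> yform z0 sl -> yform z0 sr -> yform z0 s1 -> yform z0 s2 ->
  kL sl <= kL s1 -> kL sl <= kL s2 -> kR s1 <= kR sr -> kR s2 <= kR sr ->
  ~ (Lpart z0 s1 s2 /\ Rpart z0 s1 s2) -> ta (mkT z0 sl sr) < tb (mkT z0 sl sr).
Proof.
  destruct sl as [xl pl yl ql], sr as [xr pr yr qr], s1 as [x1 p1 y1 q1], s2 as [x2 p2 y2 q2];
  unfold yform, kL, kR, Lpart, Rpart, mkT, isR; cbn [tx ty ta tb].
  intros Hz [? [[-> ->]|[-> ->]]] [? [[-> ->]|[-> ->]]] [? [[-> ->]|[-> ->]]] [? [[-> ->]|[-> ->]]];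
  destruct z0; try congruence; cbn [tx ty ta tb]; typs; lia.
Qed.

Lemma cont_refl t : ta t < tb t -> tcontains t t.
Proof.
  destruct t as [x p y q]; destruct x, y; unfold tcontains, coh_left, coh_right, coh; cbn [tx ty ta tb]; typs; lia.
Qed.

Lemma comb (V:Type) (l : list V) (Y : V -> Prop) (s : V -> tint) z0 :
 z0 <> Tnone -> (forall v, In v l) -> (forall y, Y y -> yform z0 (s y)) ->
 (exists y1 y2, Y y1 /\ Y y2 /\ ~ tintersects (s y1) (s y2)) ->
 exists t, proper t /\ (forall y, Y y -> tintersects (s y) t) /\
   (forall u, ta u < tb u -> ((forall y, Y y -> Lpart z0 u (s y) /\ Rpart z0 u (s y)) <-> tcontains u t)).
Proof.
  intros Hz Hl Hf (y1&y2&H1&H2&Hn).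
  destruct (exmin V l Y (fun v => kL (s v)) (fun v _ => Hl v) (ex_intro _ y1 H1)) as (yl & Hyl & Hml).
  destruct (exmin V l Y (fun v => - kR (s v)) (fun v _ => Hl v) (ex_intro _ y1 H1)) as (yr & Hyr & Hmr).
  assert (Htt : ta (mkT z0 (s yl) (s yr)) < tb (mkT z0 (s yl) (s yr))).
  { pose proof (Hmr y1 H1); pose proof (Hmr y2 H2).
    rewrite (char z0 (s y1) (s y2) Hz (Hf y2 H2) (proj1 (Hf y1 H1))) in Hn.
    apply (key z0 _ _ (s y1) (s y2)); auto; lia. }
  exists (mkT z0 (s yl) (s yr)). split; [left; exact Htt|]. split.
  - intros y Hy. apply tint_sym. apply (char z0 _ _ Hz (Hf y Hy) Htt).
    pose proof (cont_refl _ Htt) as Hc.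
    apply (contains_char z0 _ _ _ Hz (Hf yl Hyl) (Hf yr Hyr) Htt Htt) in Hc. destruct Hc as [HL HR].
    split.
    + apply (Lmono z0 _ (s yl) (s y) Hz (Hf yl Hyl) (Hf y Hy) (Hml y Hy) HL).
    + assert (kR (s y) <= kR (s yr)) by (pose proof (Hmr y Hy); lia).
      apply (Rmono z0 _ (s yr) (s y) Hz (Hf yr Hyr) (Hf y Hy) H HR).
  - intros u Hu. rewrite (contains_char z0 u _ _ Hz (Hf yl Hyl) (Hf yr Hyr) Htt Hu). split.
    + intros H; split; [apply (H yl Hyl) | apply (H yr Hyr)].
    + intros [HL HR] y Hy. split.
      * apply (Lmono z0 _ (s yl) (s y) Hz (Hf yl Hyl) (Hf y Hy) (Hml y Hy) HL).
      * assert (kR (s y) <= kR (s yr)) by (pose proof (Hmr y Hy); lia).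
        apply (Rmono z0 _ (s yr) (s y) Hz (Hf yr Hyr) (Hf y Hy) H HR).
Qed.

Theorem lemma5 (V : Type) (E : V -> V -> Prop) (P : V -> path2)
  (Vfin : exists l : list V, forall v, In v l)
  (Pvalid : forall v, valid2 (P v))
  (Prep : forall u v, u <> v -> (E u v <-> share_edge (P u) (P v)))
  (a b : Z) (hab : a <> b) (Y : V -> Prop)
  (HY : forall y, Y y -> forall r, in_index (P y) r <-> (r = a \/ r = b))
  (Hnc : exists y1 y2, Y y1 /\ Y y2 /\ y1 <> y2 /\
          ~ tintersects (tproj (P y1) a) (tproj (P y2) a)) :
  exists t : tint, proper t /\
    (forall y, Y y -> tintersects (tproj (P y) a) t) /\
    (forall u,
       ((forall r, in_index (P u) r <-> r = a) \/
        (exists c, c <> a /\ c <> b /\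
           (forall r, in_index (P u) r <-> (r = a \/ r = c)))) ->
       ((forall y, Y y -> E u y) <-> tcontains (tproj (P u) a) t)).
Proof.
  destruct Vfin as [l Hl]. destruct Hnc as (y1&y2&H1&H2&_&Hn).
  destruct (comb V l Y (fun v => tproj (P v) a) (vtype a b) (vtype_nn a b) Hl
     (fun y Hy => Yform (P y) a b (Pvalid y) (HY y Hy) hab)
     (ex_intro _ y1 (ex_intro _ y2 (conj H1 (conj H2 Hn))))) as (t & Hp & Hc1 & Hc3).
  exists t. split; [exact Hp|]. split; [exact Hc1|].
  intros u Hidx.
  assert (Hua : in_index (P u) a) by (destruct Hidx as [H|(c&_&_&H)]; apply H; auto).
  assert (Hub : ~ in_index (P u) b).
  { intro Hb. destruct Hidx as [H|(c&Hca&Hcb&H)]; apply H in Hb; [congruence|]. destruct Hb; congruence. }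
  rewrite <- (Hc3 _ (G2 _ _ (Pvalid u) Hua)).
  assert (Hne : forall y, Y y -> u <> y).
  { intros y Hy ->. apply Hub. apply (HY y Hy). auto. }
  split; intros H y Hy; specialize (H y Hy).
  - apply (Prep u y (Hne y Hy)) in H.
    apply (geo (P u) (P y) a b (Pvalid u) (Pvalid y) Hua Hub (HY y Hy) hab) in H. exact H.
  - apply (Prep u y (Hne y Hy)).
    apply (geo (P u) (P y) a b (Pvalid u) (Pvalid y) Hua Hub (HY y Hy) hab). exact H.
Qed.
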